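(* Let $p,q$ be odd primes with $q-p=2$, let $\varepsilon\in\{1,-1\}$, let $D=D_1\cdots D_n$ ($n\ge 0$) be a product of distinct odd primes with $\gcd(pq,D)=1$, and let $E_D/\mathbb{Q}$ be the elliptic curve $y^2=x(x+\varepsilon pD)(x+\varepsilon qD)$. For a prime $l$ let $\widetilde{E}_l$ be the reduction modulo $l$ of this equation and $a_l=l+1-\#\widetilde{E}_l(\mathbb{F}_l)$. Then: (1) if $3\nmid pqD$, then $\#\widetilde{E}_3(\mathbb{F}_3)=4$ and $a_3=0$; (2) if $7\nmid pqD$ and $p\equiv2,3,6\pmod7$, then $\#\widetilde{E}_7(\mathbb{F}_7)=8$ and $a_7=0$; (3) assume $5\nmid pqD$: (3a) if $p\equiv1,2\pmod5$, then $\#\widetilde{E}_5(\mathbb{F}_5)=4$, $a_5=2$ when $D\equiv1,4\pmod5$, and $\#\widetilde{E}_5(\mathbb{F}_5)=8$, $a_5=-2$ when $D\equiv2,3\pmod5$; (3b) if $p\equiv4\pmod5$, then $\#\widetilde{E}_5(\mathbb{F}_5)=8$, $a_5=-2$ when $D\equiv1,4\pmod5$, and $\#\widetilde{E}_5(\mathbb{F}_5)=4$, $a_5=2$ when $D\equiv2,3\pmod5$; (4) assume $7\nmid pqD$: (4a) if ($\varepsilon=1$ and $p\equiv1\pmod7$) or ($\varepsilon=-1$ and $p\equiv4\pmod7$), then $\#\widetilde{E}_7(\mathbb{F}_7)=12$, $a_7=-4$ when $D\equiv1,2,4\pmod7$, and $\#\widetilde{E}_7(\mathbb{F}_7)=4$,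 $a_7=4$ when $D\equiv3,5,6\pmod7$; (4b) if ($\varepsilon=1$ and $p\equiv4\pmod7$) or ($\varepsilon=-1$ and $p\equiv1\pmod7$), then $\#\widetilde{E}_7(\mathbb{F}_7)=4$, $a_7=4$ when $D\equiv1,2,4\pmod7$, and $\#\widetilde{E}_7(\mathbb{F}_7)=12$, $a_7=-4$ when $D\equiv3,5,6\pmod7$; (5) $\#\widetilde{E}_2(\mathbb{F}_2)=3$; $\#\widetilde{E}_{D_i}(\mathbb{F}_{D_i})=D_i+1$ for $i=1,\dots,n$; $\#\widetilde{E}_p(\mathbb{F}_p)=p$ if $(\frac{2\varepsilon D}{p})=1$ and $=p+2$ if $(\frac{2\varepsilon D}{p})=-1$; $\#\widetilde{E}_q(\mathbb{F}_q)=q$ if $(\frac{-2\varepsilon D}{q})=1$ and $=q+2$ if $(\frac{-2\varepsilon D}{q})=-1$.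
   Context: $\widetilde{E}_l$ denotes the projective plane cubic over $\mathbb{F}_l$ obtained by reducing the given Weierstrass equation modulo $l$; $\#\widetilde{E}_l(\mathbb{F}_l)$ counts all of its $\mathbb{F}_l$-points (including the point at infinity and, in the case of bad reduction, the singular point). $(\frac{\cdot}{\cdot})$ is the Legendre symbol. *)

(* Defs.v *)
From HB Require Import structures.
From mathcomp Require Import all_boot all_order all_algebra.
Set Implicit Arguments. Unset Strict Implicit. Unset Printing Implicit Defensive.
Import Order.TTheory GRing.Theory Num.Theory.
Local Open Scope ring_scope.

(* Number of F_l-points of the projective plane cubic
   Y^2 Z = X (X + a Z) (X + b Z) reduced mod l (l prime):
   nonzero solutions in F_l^3 counted up to the (l-1) nonzero scalars. *)
Definition Ecount (l : nat) (a b : int) : nat :=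
  (#|[set v : 'F_l * 'F_l * 'F_l |
      ((v != (0, 0, 0)) &&
       (v.1.2 ^+ 2 * v.2 ==
        v.1.1 * (v.1.1 + a%:~R * v.2) * (v.1.1 + b%:~R * v.2)))%R]| %/ l.-1)%N.

Definition atrace (l : nat) (a b : int) : int :=
  (l%:Z + 1 - (Ecount l a b)%:Z)%R.

Definition legendre (a : int) (p : nat) : int :=
  let x : 'F_p := a%:~R in
  if x == 0 then 0 else if [exists y : 'F_p, y ^+ 2 == x] then 1 else -1.

(* Main.v *)
Require Import Defs.
From mathcomp Require Import all_boot all_order all_algebra.
From mathcomp Require Import ring.
Set Implicit Arguments. Unset Strict Implicit. Unset Printing Implicit Defensive.
Import Order.TTheory GRing.Theory Num.Theory.
Local Open Scope ring_scope.

Definition aff (l : nat) (A B : 'F_l) :=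
  [set v : 'F_l * 'F_l | v.2 ^+ 2 == v.1 * (v.1 + A) * (v.1 + B)].

Arguments aff : clear implicits.

Lemma eqv (F : fieldType) (A B x y z : F) : z != 0 ->
  ((y*z)^+2 * z == (x*z)*((x*z) + A*z)*((x*z)+B*z)) = (y^+2 == x*(x+A)*(x+B)).
Proof.
move=> nz.
rewrite -subr_eq0 -[RHS]subr_eq0.
have -> : (y * z) ^+ 2 * z - x * z * (x * z + A * z) * (x * z + B * z)
   = z ^+ 3 * (y ^+ 2 - x * (x + A) * (x + B)) by ring.
by rewrite mulf_eq0 expf_eq0 /= (negPf nz).
Qed.

Lemma Ecount_aff l a b : prime l -> Ecount l a b = #|aff l a%:~R b%:~R|.+1.
Proof.
move=> pl.
set A : 'F_l := a%:~R; set B : 'F_l := b%:~R.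
rewrite /Ecount -/A -/B.
set S := [set v : 'F_l * 'F_l * 'F_l | _].
have l1 : (0 < l.-1)%N by move: (prime_gt1 pl); case: (l) => [|[|k]].
suff -> : #|S| = (l.-1 * #|aff l A B|.+1)%N by rewrite mulKn.
rewrite -(cardsID [set v : 'F_l * 'F_l * 'F_l | v.2 == 0] S).
have -> : S :&: [set v | v.2 == 0] = (fun y => (0, y, 0)) @: [set~ 0].
  apply/setP => -[[x y] z]; rewrite !inE /=.
  apply/andP/imsetP.
  - move=> [/andP[nz /eqP e] /eqP z0]; subst z.
    move: e; rewrite !mulr0 !addr0 => /esym /eqP.
    rewrite !mulf_eq0 !orbb => /eqP x0; subst x.
    exists y => //; rewrite !inE; apply: contra nz => /eqP ->; by [].
  - case=> y'; rewrite !inE => ny [-> -> ->]; split => //.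
    rewrite !mulr0 !mul0r eqxx andbT.
    by apply/negP => /eqP [] y0; move: ny; rewrite y0 eqxx.
have inj0 : injective (fun y : 'F_l => ((0 : 'F_l), y, (0 : 'F_l))) by move=> y1 y2 [].
rewrite (card_imset _ inj0).
rewrite cardsC1 card_Fp //.
have -> : S :\: [set v | v.2 == 0] =
   (fun w : 'F_l * ('F_l * 'F_l) => (w.2.1 * w.1, w.2.2 * w.1, w.1))
      @: setX [set~ 0] (aff l A B).
  apply/setP => -[[x y] z]; rewrite !inE /=.
  apply/andP/imsetP.
  - move=> [nz /andP[_ e]].
    exists (z, (x / z, y / z)).
      by rewrite !inE /= nz /= -(eqv _ _ _ _ nz) !divfK.
    by rewrite /= !divfK.
  - case=> -[z' [x' y']]; rewrite !inE /= => /andP[nz e] [-> -> ->].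
    split => //; rewrite (eqv _ _ _ _ nz) e andbT.
    by apply: contra nz => /eqP [] _ _ ->.
rewrite card_in_imset; last first.
  move=> [z1 [x1 y1]] [z2 [x2 y2]]; rewrite !inE /= => /andP[n1 _] _ E.
  have ex := congr1 (fun v => v.1.1) E; have ey := congr1 (fun v => v.1.2) E.
  have ez := congr1 snd E; simpl in ex, ey, ez.
  subst z2; by rewrite (mulIf n1 ex) (mulIf n1 ey).
by rewrite cardsX cardsC1 card_Fp // mulnS addnC.
Qed.

Lemma aff0 l (c : 'F_l) : prime l ->
  #|[set v : 'F_l * 'F_l | v.2 ^+ 2 == v.1 * v.1 * (v.1 + c)]| =
  #|[set t : 'F_l | t ^+ 2 != c]|.+1.
Proof.
move=> pl.
set T := [set v : 'F_l * 'F_l | _].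
rewrite -(cardsID [set v : 'F_l * 'F_l | v.1 == 0] T).
have -> : T :&: [set v | v.1 == 0] = [set (0, 0)].
  apply/setP => -[x y]; rewrite !inE /=.
  apply/andP/eqP.
  - move=> [/eqP e /eqP x0]; subst x.
    move: e; rewrite !mul0r => /eqP; rewrite expf_eq0 /= => /eqP ->; by [].
  - by case=> -> ->; rewrite !mul0r expr2 mul0r eqxx.
rewrite cards1 add1n; congr S.
set g := fun t : 'F_l => (t ^+ 2 - c, t * (t ^+ 2 - c)).
have -> : T :\: [set v | v.1 == 0] = g @: [set t | t ^+ 2 != c].
  apply/setP => -[x y]; rewrite !inE /=.
  apply/andP/imsetP.
  - move=> [nx /eqP e].
    have ex : (y / x) ^+ 2 - c = x.
      rewrite expr_div_n e; apply/eqP; rewrite subr_eq.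
      apply/eqP; field; exact: nx.
    exists (y / x); first by rewrite inE -subr_eq0 ex.
    by rewrite /g ex divfK.
  - case=> t; rewrite inE => nt [-> ->].
    split; first by rewrite subr_eq0.
    apply/eqP.
    have -> : t ^+ 2 - c + c = t ^+ 2 by rewrite subrK.
    by rewrite exprMn; ring.
rewrite card_in_imset // => t1 t2; rewrite !inE => n1 _ E.
have e1 := congr1 fst E; have e2 := congr1 snd E; simpl in e1, e2.
rewrite -e1 in e2.
have nz : t1 ^+ 2 - c != 0 by rewrite subr_eq0.
exact: (mulIf nz e2).
Qed.

Lemma sqC l (c : 'F_l) : prime l ->
  #|[set t : 'F_l | t ^+ 2 != c]| = (l - #|[set t : 'F_l | t ^+ 2 == c]|)%N.
Proof.
move=> pl; transitivity (#|'F_l| - #|[set t : 'F_l | t ^+ 2 == c]|)%N; last first.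
  by congr (_ - _)%N; exact: card_Fp.
rewrite -(cardsC [set t : 'F_l | t ^+ 2 == c]) addKn.
by apply: eq_card => t; rewrite !inE.
Qed.

Lemma sq0 l : prime l -> #|[set t : 'F_l | t ^+ 2 != 0]| = l.-1.
Proof.
move=> pl; rewrite sqC //.
have -> : [set t : 'F_l | t ^+ 2 == 0] = [set 0].
  by apply/setP => t; rewrite !inE expf_eq0.
by rewrite cards1 subn1.
Qed.

Lemma two_nz l : prime l -> odd l -> (2%:R : 'F_l) != 0.
Proof.
move=> pl ol; rewrite -(dvdn_pcharf (pchar_Fp pl)).
apply/negP => /dvdn_leq-/(_ isT).
by have := prime_gt1 pl; case: l pl ol => [|[|[|l]]] // _ _ _; rewrite !ltnS.
Qed.

Lemma sqS l (c : 'F_l) : prime l -> odd l -> c != 0 -> (exists y : 'F_l, y ^+ 2 == c) ->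
  (#|[set t : 'F_l | t ^+ 2 != c]|.+2 = l)%N.
Proof.
move=> pl ol nc [s /eqP es]; rewrite sqC //.
have -> : [set t : 'F_l | t ^+ 2 == c] = [set s; -s].
  by apply/setP => t; rewrite !inE -es eqf_sqr.
have ns : s != - s.
  apply/eqP => E.
  have : s * 2%:R = 0 by rewrite mulr_natr mulr2n {1}E addNr.
  move/eqP; rewrite mulf_eq0 (negPf (two_nz pl ol)) orbF => /eqP s0.
  by move: nc; rewrite -es s0 expr0n.
rewrite cards2 ns.
have := prime_gt1 pl; case: l {c s nc es ns} pl ol => [|[|[|l]]] //= _ _ _.
Qed.

Lemma sqN l (c : 'F_l) : prime l -> ~~ [exists y : 'F_l, y ^+ 2 == c] ->
  #|[set t : 'F_l | t ^+ 2 != c]| = l.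
Proof.
move=> pl ne; rewrite sqC //.
have -> : [set t : 'F_l | t ^+ 2 == c] = set0.
  apply/setP => t; rewrite !inE; apply/negP => E; case/negP: ne.
  by apply/existsP; exists t.
by rewrite cards0 subn0.
Qed.

Lemma sum_ord N (H : (0 < N)%N) (G : 'I_N -> nat) :
  (\sum_(i < N) G i)%N = sumn [seq G (Ordinal (ltn_pmod m H)) | m <- iota 0 N].
Proof.
rewrite sumnE big_map.
rewrite (eq_bigr (fun i : 'I_N => G (Ordinal (ltn_pmod i H)))); last first.
  by move=> i _; congr G; apply: val_inj; rewrite /= modn_small.
by rewrite -(big_mkord xpredT (fun i => G (Ordinal (ltn_pmod i H)))) /index_iota subn0.
Qed.

Definition mkF l (m : nat) : 'F_l := Ordinal (ltn_pmod m (isT : (0 < (Zp_trunc (pdiv l)).+2)%N)).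

Lemma aff_comp l (A B : 'F_l) : #|aff l A B| =
  sumn [seq sumn [seq nat_of_bool ((mkF l y)^+2 == mkF l x * (mkF l x + A) * (mkF l x + B))
        | y <- iota 0 (Zp_trunc (pdiv l)).+2] | x <- iota 0 (Zp_trunc (pdiv l)).+2].
Proof.
rewrite -sum1_card.
transitivity (\sum_(x : 'F_l) \sum_(y : 'F_l) (if (x, y) \in aff l A B then 1 else 0))%N.
  rewrite pair_bigA big_mkcond /=; apply: eq_bigr => -[x y] _ //.
rewrite (sum_ord (isT : (0 < (Zp_trunc (pdiv l)).+2)%N)).
congr sumn; apply: eq_map => x.
rewrite (sum_ord (isT : (0 < (Zp_trunc (pdiv l)).+2)%N)).
congr sumn; apply: eq_map => y.
by rewrite inE /=; case: ifP.
Qed.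

Definition F l r s (e : bool) : nat :=
  #|aff l ((if e then -1 else 1) * r%:R * s%:R) ((if e then -1 else 1) * (r + 2)%:R * s%:R)|.

Definition cnt_c l (A B : 'F_l) :=
  sumn [seq sumn [seq nat_of_bool ((mkF l y)^+2 == mkF l x * (mkF l x + A) * (mkF l x + B))
        | y <- iota 0 (Zp_trunc (pdiv l)).+2] | x <- iota 0 (Zp_trunc (pdiv l)).+2].

Definition Fc l r s (e : bool) : nat :=
  @cnt_c l ((if e then -1 else 1) * r%:R * s%:R) ((if e then -1 else 1) * (r + 2)%:R * s%:R).

Lemma FE l r s e : F l r s e = Fc l r s e.
Proof. by rewrite /F aff_comp. Qed.

Definition cond l r s := [&& (0 < r)%N, (0 < s)%N & ((r + 2) %% l != 0)%N].

Definition tab3 (F : nat -> nat -> bool -> nat) r s e := cond 3 r s ==> (F r s e == 3%N).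
Definition tab5 (F : nat -> nat -> bool -> nat) r s e := cond 5 r s ==>
  ((r \in [:: 1; 2]%N) ==> ((s \in [:: 1; 4]%N) ==> (F r s e == 3%N)) && ((s \in [:: 2; 3]%N) ==> (F r s e == 7%N)))
  && ((r == 4%N) ==> ((s \in [:: 1; 4]%N) ==> (F r s e == 7%N)) && ((s \in [:: 2; 3]%N) ==> (F r s e == 3%N))).
Definition tab7 (F : nat -> nat -> bool -> nat) r s e := cond 7 r s ==>
  [&& (r \in [:: 2; 3; 6]%N) ==> (F r s e == 7%N),
      ((~~ e && (r == 1%N)) || (e && (r == 4%N))) ==>
        ((s \in [:: 1; 2; 4]%N) ==> (F r s e == 11%N)) && ((s \in [:: 3; 5; 6]%N) ==> (F r s e == 3%N)) &
      ((~~ e && (r == 4%N)) || (e && (r == 1%N))) ==>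
        ((s \in [:: 1; 2; 4]%N) ==> (F r s e == 3%N)) && ((s \in [:: 3; 5; 6]%N) ==> (F r s e == 11%N))].

Definition alltab n (t : nat -> nat -> bool -> bool) :=
  all (fun r => all (fun s => t r s true && t r s false) (iota 0 n)) (iota 0 n).

Lemma alltabP n t : alltab n t -> forall r s e, (r < n)%N -> (s < n)%N -> t r s e.
Proof.
move=> /allP H r s e hr hs.
have := H r; rewrite mem_iota hr => /(_ isT) /allP /(_ s).
rewrite mem_iota hs => /(_ isT) /andP[].
by case: e.
Qed.

Lemma tab3_ok : alltab 3 (tab3 (Fc 3)).
Proof. vm_compute. reflexivity. Qed.
Lemma tab5_ok : alltab 5 (tab5 (Fc 5)).
Proof. vm_compute. reflexivity. Qed.
Lemma tab7_ok : alltab 7 (tab7 (Fc 7)).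
Proof. vm_compute. reflexivity. Qed.
Lemma F2 e : F 2 1 1 e = 2%N.
Proof. rewrite FE. by case: e; vm_compute. Qed.


Lemma aff_eq l (A B c : 'F_l) : (forall x : 'F_l, x * (x + A) * (x + B) = x * x * (x + c)) ->
  aff l A B = [set v : 'F_l * 'F_l | v.2 ^+ 2 == v.1 * v.1 * (v.1 + c)].
Proof. by move=> h; apply/setP => v; rewrite !inE h. Qed.

Lemma node_sq l (A B c : 'F_l) : prime l -> odd l ->
  (forall x : 'F_l, x * (x + A) * (x + B) = x * x * (x + c)) ->
  c != 0 -> (exists y : 'F_l, y ^+ 2 == c) -> (#|aff l A B|.+1 = l)%N.
Proof. by move=> pl ol h nc ex; rewrite (aff_eq h) aff0 // sqS. Qed.

Lemma node_nsq l (A B c : 'F_l) : prime l ->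
  (forall x : 'F_l, x * (x + A) * (x + B) = x * x * (x + c)) ->
  ~~ [exists y : 'F_l, y ^+ 2 == c] -> (#|aff l A B|.+1 = l.+2)%N.
Proof. by move=> pl h ne; rewrite (aff_eq h) aff0 // sqN. Qed.

Lemma cusp l (A B : 'F_l) : prime l ->
  (forall x : 'F_l, x * (x + A) * (x + B) = x * x * (x + 0)) -> (#|aff l A B|.+1 = l.+1)%N.
Proof.
move=> pl h; rewrite (aff_eq h) aff0 // sq0 //.
by rewrite prednK // (prime_gt0 pl).
Qed.

Lemma intr_sign (e : bool) : ((if e then -1 else 1 : int)%:~R : 'F_7) = 1.
Abort.

Lemma odd_prod (s : seq nat) : all odd s -> odd (\prod_(d <- s) d).
Proof.
elim: s => [|x s IH] /=; first by rewrite big_nil.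
by move=> /andP[ox os]; rewrite big_cons oddM ox IH.
Qed.

Lemma dvd_prod (s : seq nat) d : d \in s -> (d %| \prod_(x <- s) x)%N.
Proof. by move=> ds; rewrite (big_rem d) //= dvdn_mulr. Qed.

Lemma sgn_int l (e : bool) : ((if e then -1 else 1 : int)%:~R : 'F_l) = if e then -1 else 1.
Proof. by case: e; rewrite ?intrN mulr1z. Qed.

Lemma redA l (e : bool) (p D : nat) : prime l ->
  (((if e then -1 else 1) * p%:Z * D%:Z)%:~R : 'F_l) =
  (if e then -1 else 1) * (p %% l)%:R * (D %% l)%:R.
Proof. by move=> pl; rewrite !intrM sgn_int -!pmulrn !(Fp_nat_mod pl). Qed.

Lemma redB l (e : bool) (p D : nat) : prime l ->
  (((if e then -1 else 1) * (p + 2)%N%:Z * D%:Z)%:~R : 'F_l) =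
  (if e then -1 else 1) * ((p %% l) + 2)%:R * (D %% l)%:R.
Proof. by move=> pl; rewrite !intrM sgn_int -!pmulrn !natrD !(Fp_nat_mod pl). Qed.

Unset Implicit Arguments.
Set Strict Implicit.
Local Close Scope ring_scope.

Theorem lemma2p3 (p q : nat) (eps : int) (Ds : seq nat) :
  prime p -> odd p -> prime q -> odd q -> q = (p + 2)%N ->
  (eps = 1 \/ eps = -1)%R ->
  all prime Ds -> all odd Ds -> uniq Ds ->
  let D := (\prod_(d <- Ds) d)%N in
  coprime (p * q) D ->
  let a := (eps * p%:Z * D%:Z)%R in
  let b := (eps * q%:Z * D%:Z)%R in
  (* (1) *)
  (~~ (3 %| p * q * D)%N -> Ecount 3 a b = 4%N /\ atrace 3 a b = 0%R) /\
  (* (2) *)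
  (~~ (7 %| p * q * D)%N -> (p %% 7)%N \in [:: 2; 3; 6]%N ->
     Ecount 7 a b = 8%N /\ atrace 7 a b = 0%R) /\
  (* (3) *)
  (~~ (5 %| p * q * D)%N ->
     ((p %% 5)%N \in [:: 1; 2]%N ->
        ((D %% 5)%N \in [:: 1; 4]%N -> Ecount 5 a b = 4%N /\ atrace 5 a b = 2%R) /\
        ((D %% 5)%N \in [:: 2; 3]%N -> Ecount 5 a b = 8%N /\ atrace 5 a b = (-2)%R)) /\
     ((p %% 5)%N = 4%N ->
        ((D %% 5)%N \in [:: 1; 4]%N -> Ecount 5 a b = 8%N /\ atrace 5 a b = (-2)%R) /\
        ((D %% 5)%N \in [:: 2; 3]%N -> Ecount 5 a b = 4%N /\ atrace 5 a b = 2%R))) /\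
  (* (4) *)
  (~~ (7 %| p * q * D)%N ->
     ((eps = 1%R /\ (p %% 7)%N = 1%N) \/ (eps = (-1)%R /\ (p %% 7)%N = 4%N) ->
        ((D %% 7)%N \in [:: 1; 2; 4]%N -> Ecount 7 a b = 12%N /\ atrace 7 a b = (-4)%R) /\
        ((D %% 7)%N \in [:: 3; 5; 6]%N -> Ecount 7 a b = 4%N /\ atrace 7 a b = 4%R)) /\
     ((eps = 1%R /\ (p %% 7)%N = 4%N) \/ (eps = (-1)%R /\ (p %% 7)%N = 1%N) ->
        ((D %% 7)%N \in [:: 1; 2; 4]%N -> Ecount 7 a b = 4%N /\ atrace 7 a b = 4%R) /\
        ((D %% 7)%N \in [:: 3; 5; 6]%N -> Ecount 7 a b = 12%N /\ atrace 7 a b = (-4)%R))) /\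
  (* (5) *)
  (Ecount 2 a b = 3%N /\
   (forall d, d \in Ds -> Ecount d a b = d.+1) /\
   (legendre (2 * eps * D%:Z)%R p = 1%R -> Ecount p a b = p) /\
   (legendre (2 * eps * D%:Z)%R p = (-1)%R -> Ecount p a b = (p + 2)%N) /\
   (legendre ((-2) * eps * D%:Z)%R q = 1%R -> Ecount q a b = q) /\
   (legendre ((-2) * eps * D%:Z)%R q = (-1)%R -> Ecount q a b = (q + 2)%N)).
Proof.
move=> pp op pq oq qE Heps pDs oDs uDs D cop a b.
subst q.
have [e he] : exists e : bool, eps = (if e then -1 else 1)%R.
  by case: Heps => ->; [exists false | exists true].
subst eps.
have EC : forall l, prime l -> Ecount l a b = (F l (p %% l) (D %% l) e).+1.
  by move=> l pl; rewrite /a /b Ecount_aff // redA // redB.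
have ND : forall l, prime l -> ~~ (l %| p * (p + 2) * D)%N -> cond l (p %% l) (D %% l).
  move=> l pl; rewrite !Euclid_dvdM // !negb_or => /andP[/andP[n1 n2] n3].
  rewrite /dvdn in n1 n2 n3.
  by rewrite /cond !lt0n modnDml n1 n2 n3.
split.
  move=> h3; have c3 := ND 3 isT h3.
  have := @alltabP 3 _ tab3_ok (p %% 3) (D %% 3) e (ltn_pmod p (isT : (0 < 3)%N)) (ltn_pmod D (isT : (0 < 3)%N)).
  rewrite /tab3 c3 -!FE /= => /eqP E3.
  by rewrite /atrace EC // E3.
split.
  move=> h7 hr; have c7 := ND 7 isT h7.
  have := @alltabP 7 _ tab7_ok (p %% 7) (D %% 7) e (ltn_pmod p (isT : (0 < 7)%N)) (ltn_pmod D (isT : (0 < 7)%N)).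
  rewrite /tab7 c7 -!FE hr /= => /and3P[/eqP E _ _].
  by rewrite /atrace EC // E.
split.
  move=> h5; have c5 := ND 5 isT h5.
  have T := @alltabP 5 _ tab5_ok (p %% 5) (D %% 5) e (ltn_pmod p (isT : (0 < 5)%N)) (ltn_pmod D (isT : (0 < 5)%N)).
  rewrite /tab5 c5 -!FE /= in T.
  split.
    move=> hr; split => hs; move: T; rewrite hr hs /=.
      by move=> /andP[/andP[/eqP E _] _]; rewrite /atrace EC // E.
    by move=> /andP[/andP[_ /eqP E] _]; rewrite /atrace EC // E.
  move=> hr; split => hs; move: T; rewrite hr hs eqxx /=.
        by move=> /andP[/eqP E _]; rewrite /atrace EC // hr E.
  by move=> /andP[_ /eqP E]; rewrite /atrace EC // hr E.
split.
  move=> h7; have c7 := ND 7 isT h7.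
  have T := @alltabP 7 _ tab7_ok (p %% 7) (D %% 7) e (ltn_pmod p (isT : (0 < 7)%N)) (ltn_pmod D (isT : (0 < 7)%N)).
  rewrite /tab7 c7 -!FE /= in T.
  split.
    move=> H.
    have hb : (~~ e && (p %% 7 == 1)%N) || (e && (p %% 7 == 4)%N).
      by case: H => -[E1 ->]; clear -E1; case: e E1 => /eqP.
    rewrite hb /= in T.
    split => hs; move: T; rewrite hs /=.
      by move=> /and3P[_ /andP[/eqP E _] _]; rewrite /atrace EC // E.
    by move=> /and3P[_ /andP[_ /eqP E] _]; rewrite /atrace EC // E.
  move=> H.
  have hb : (~~ e && (p %% 7 == 4)%N) || (e && (p %% 7 == 1)%N).
    by case: H => -[E1 ->]; clear -E1; case: e E1 => /eqP.
  rewrite hb /= in T.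
  split => hs; move: T; rewrite hs /=.
    by move=> /and3P[_ _ /andP[/eqP E _]]; rewrite /atrace EC // E.
  by move=> /and3P[_ _ /andP[_ /eqP E]]; rewrite /atrace EC // E.
have oD : odd D by exact: odd_prod.
split.
  by rewrite EC // !modn2 op oD /= F2.
split.
  move=> d hd; have pd := allP pDs d hd.
  have hD : (D %% d = 0)%N by apply/eqP; exact: dvd_prod.
  rewrite EC // /F hD; apply: cusp => // x.
  by rewrite mulr0n !mulr0 !addr0.
have Pp : (legendre (2 * (if e then -1 else 1) * D%:Z)%R p = 1%R -> Ecount p a b = p) /\
   (legendre (2 * (if e then -1 else 1) * D%:Z)%R p = (-1)%R -> Ecount p a b = (p + 2)%N).
  rewrite EC // /F modnn add0n.
  have hc : (((2 * (if e then -1 else 1) * D%:Z)%:~R : 'F_p) =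
     (if e then -1 else 1) * 2%:R * (D %% p)%:R)%R.
    by rewrite !intrM sgn_int -!pmulrn (Fp_nat_mod pp); ring.
  have h : forall x : 'F_p, (x * (x + (if e then -1 else 1) * 0%:R * (D %% p)%:R) *
       (x + (if e then -1 else 1) * 2%:R * (D %% p)%:R) =
       x * x * (x + (if e then -1 else 1) * 2%:R * (D %% p)%:R))%R.
    by move=> x; rewrite mulr0n mulr0 mul0r addr0.
  rewrite /legendre hc.
  case: ifP => [_|/negbT nc]; first by split => /eqP.
  case: ifP => [/existsP ex | ne]; split => // /eqP //.
    by move=> _; rewrite (node_sq pp op h nc ex).
  by move=> _; rewrite (node_nsq pp h (negbT ne)) addn2.
have Pq : (legendre ((-2) * (if e then -1 else 1) * D%:Z)%R (p + 2) = 1%R -> Ecount (p + 2) a b = (p + 2)%N) /\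
   (legendre ((-2) * (if e then -1 else 1) * D%:Z)%R (p + 2) = (-1)%R -> Ecount (p + 2) a b = (p + 2 + 2)%N).
  have lt : (p < p + 2)%N by rewrite addn2 leqnSn.
  rewrite EC // /F (modn_small lt) (pchar_Fp_0 pq).
  have p2 : ((p%:R : 'F_(p + 2)) = - 2%:R)%R.
    by apply/eqP; rewrite -addr_eq0 -natrD (pchar_Fp_0 pq).
  have hc : ((((-2) * (if e then -1 else 1) * D%:Z)%:~R : 'F_(p + 2)) =
     (if e then -1 else 1) * p%:R * (D %% (p + 2))%:R)%R.
    rewrite (_ : (-2 : int) = - 2%:Z)%R //.
    by rewrite !intrM intrN sgn_int -!pmulrn (Fp_nat_mod pq) p2; ring.
  have h : forall x : 'F_(p + 2), (x * (x + (if e then -1 else 1) * p%:R * (D %% (p + 2))%:R) *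
       (x + (if e then -1 else 1) * 0 * (D %% (p + 2))%:R) =
       x * x * (x + (if e then -1 else 1) * p%:R * (D %% (p + 2))%:R))%R.
    by move=> x; rewrite mulr0 mul0r addr0 mulrAC.
  rewrite /legendre hc.
  case: ifP => [_|/negbT nc]; first by split => /eqP.
  case: ifP => [/existsP ex | ne]; split => // /eqP //.
    by move=> _; rewrite (node_sq pq oq h nc ex).
  by move=> _; rewrite (node_nsq pq h (negbT ne)) (addn2 (p + 2)).
by move: Pp Pq => [? ?] [? ?]; repeat split.
Qed.
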